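(* Let $x=(x_1,\dots,x_k)$ and $y=(y_1,\dots,y_k)$ be integer sequences of length $k$ such that $S_{i_1,\dots,i_m}(x)=S_{i_1,\dots,i_m}(y)$ for every $m$ with $1\le m\le 6$ and every $i_1,\dots,i_m\in[k]$. Then $y$ is a cyclic shift of $x$, i.e. there is an integer $c$ with $x_j=y_{j+c}$ for all $j\in[k]$ (indices mod $k$).
   Context: Indices are interpreted modulo $k$ and $[k]=\{1,\dots,k\}$. For $i_1,\dots,i_m\in[k]$, the cyclic statistic of order $m$ is $S_{i_1,\dots,i_m}(x)=\sum_{j=1}^{k}x_{i_1+j}x_{i_2+j}\cdots x_{i_m+j}$. *)

(* Defs.v *)
From mathcomp Require Import all_boot all_order all_algebra.
Set Implicit Arguments. Unset Strict Implicit. Unset Printing Implicit Defensive.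
Import GRing.Theory Num.Theory.
Local Open Scope ring_scope.

(* Entry of an integer sequence x = (x_1,...,x_k) with (integer) index n
   interpreted modulo k: at_mod x n = x_r where r in [k] and r = n (mod k).
   x_r (1 <= r <= k) is stored at position r-1 of the tuple, so the
   position is ((n - 1) mod k). *)
Definition at_mod (k : nat) (x : k.-tuple int) (n : int) : int :=
  nth 0 x `|((n - 1) %% k%:Z)%Z|%N.

Definition cyc_stat (k m : nat) (i : 'I_m -> nat) (x : k.-tuple int) : int :=
  \sum_(1 <= j < k.+1) \prod_(l < m) at_mod x (i l + j)%N%:Z.

(* Main.v *)
Require Import Defs.
From mathcomp Require Import all_boot all_order all_algebra all_field.
From mathcomp Require Import zify.
Set Implicit Arguments. Unset Strict Implicit. Unset Printing Implicit Defensive.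
Import GRing.Theory Num.Theory.
Lemma coprime_of_primes n a : 0 < n ->
  (forall p, prime p -> p %| n -> ~~ (p %| a)) -> coprime a n.
Proof.
move=> n0 H; rewrite /coprime; apply/negPn/negP => ng1.
have g0 : 0 < gcdn a n by rewrite gcdn_gt0 n0 orbT.
have g1 : 1 < gcdn a n by case: (gcdn a n) g0 ng1 => [|[|m]].
have pp := pdiv_prime g1.
have pd := pdiv_dvd (gcdn a n).
move: (H _ pp (dvdn_trans pd (dvdn_gcdr a n))).
by rewrite (dvdn_trans pd (dvdn_gcdl a n)).
Qed.

Lemma dvd_prod_mem (l : seq nat) q : q \in l -> q %| \prod_(i <- l) i.
Proof. by move=> ql; rewrite (big_rem q) //= dvdn_mulr. Qed.

Lemma units2_aux n z (l : seq nat) : 0 < n -> uniq l -> all prime l ->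
  (forall p, p \in l -> p %| n) -> (2 \in l -> ~~ odd z) ->
  exists a b, a + b = z %[mod n] /\
    (forall p, p \in l -> ~~ (p %| a) /\ ~~ (p %| b)).
Proof.
move=> n0; elim: l => [|p l IH] /=.
  by move=> *; exists 0, z; split.
move=> /andP[pl ul] /andP[pp apl] dl h2.
have dl' : forall q, q \in l -> q %| n by move=> q ql; apply: dl; rewrite inE ql orbT.
have h2' : 2 \in l -> ~~ odd z by move=> h; apply: h2; rewrite inE h orbT.
have [a0 [b0 [e0 g0]]] := IH ul apl dl' h2'.
set M := \prod_(i <- l) i.
have pM : ~~ (p %| M).
  rewrite /M Euclid_dvd_prod // big_has; apply/hasPn => q ql /=.
  by rewrite dvdn_prime2 //; [apply/eqP => E; move: pl; rewrite E ql | exact: (allP apl)].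
have pn : p %| n by apply: dl; rewrite inE eqxx.
pose a t := a0 + M * t.
pose b t := b0 + M * t * n.-1.
have eab : forall t, a t + b t = z %[mod n].
  move=> t; rewrite /a /b -e0.
  have -> : a0 + M * t + (b0 + M * t * n.-1) = a0 + b0 + (M * t) * n.
    by rewrite -{2}(prednK n0) mulnS; lia.
  by rewrite addnC modnMDl.
have qab : forall t q, q \in l -> ~~ (q %| a t) /\ ~~ (q %| b t).
  move=> t q ql; have qM := dvd_prod_mem ql.
  have [ga gb] := g0 q ql; split.
    by rewrite /a dvdn_addl // dvdn_mulr.
  by rewrite /b dvdn_addl // -mulnA dvdn_mulr.
suff [t [pa pb]] : exists t, ~~ (p %| a t) /\ ~~ (p %| b t).
  exists (a t), (b t); split => // q; rewrite inE => /orP[/eqP -> //|ql].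
  exact: qab.
have p2 := prime_gt1 pp.
case: (eqVneq p 2) => [Ep | np2].
  have ez : ~~ odd z by apply: h2; rewrite inE Ep eqxx.
  rewrite Ep in pn pM.
  have oM : odd M by move: pM; rewrite dvdn2 negbK.
  have [t ot] : exists t, odd (a t).
    case oa: (odd a0); first by exists 0; rewrite /a muln0 addn0.
    by exists 1; rewrite /a muln1 oddD oa oM.
  exists t; rewrite Ep !dvdn2 !negbK; split => //.
  have := eab t; move/(congr1 (fun m => m %% 2)); rewrite /= !modn_dvdm //.
  rewrite !modn2 oddD ot (negbTE ez).
  by case: (odd (b t)).
have p3 : 2 < p by move: p2 np2; clear; case: p => [|[|[|q]]].
have bada : forall t1 t2, t1 < t2 <= 2 -> p %| a t1 -> p %| a t2 -> False.
  move=> t1 t2 /andP[lt le] h1 hh2.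
  have : p %| M * (t2 - t1).
    by move: hh2; rewrite /a (_ : a0 + M * t2 = (a0 + M * t1) + M * (t2 - t1));
      [rewrite dvdn_addr | rewrite -addnA -mulnDr subnKC // ltnW].
  rewrite Euclid_dvdM // (negbTE pM) /= => /dvdn_leq; lia.
have badb : forall t1 t2, t1 < t2 <= 2 -> p %| b t1 -> p %| b t2 -> False.
  move=> t1 t2 /andP[lt le] h1 hh2.
  have : p %| M * (t2 - t1) * n.-1.
    move: hh2; rewrite /b (_ : b0 + M * t2 * n.-1 = (b0 + M * t1 * n.-1) + M * (t2 - t1) * n.-1).
      by rewrite dvdn_addr.
    by rewrite -addnA -mulnDl -mulnDr subnKC // ltnW.
  rewrite !Euclid_dvdM // (negbTE pM) /= => /orP[/dvdn_leq|]; first lia.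
  move=> h; have : p %| n.-1 + 1 by rewrite addn1 prednK.
  by rewrite dvdn_addr // => /dvdn_leq; lia.
have dec : forall t, (exists t, ~~ (p %| a t) /\ ~~ (p %| b t)) \/ ((p %| a t) \/ (p %| b t)).
  move=> t; case E1: (p %| a t); [by right; left|]; case E2: (p %| b t); [by right; right|].
  by left; exists t; rewrite E1 E2.
case: (dec 0) => [//|h0]; case: (dec 1) => [//|h1]; case: (dec 2) => [//|hh2].
exfalso.
case: h0 => h0; case: h1 => h1.
- exact: bada 0 1 _ h0 h1.
- case: hh2 => hh2; [exact: bada 0 2 _ h0 hh2 | exact: badb 1 2 _ h1 hh2].
- case: hh2 => hh2; [exact: bada 1 2 _ h1 hh2 | exact: badb 0 2 _ h0 hh2].
- exact: badb 0 1 _ h0 h1.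
Qed.

Lemma units2 n z : 0 < n -> (odd n || ~~ odd z) ->
  exists a b, [/\ coprime a n, coprime b n & a + b = z %[mod n]].
Proof.
move=> n0 hz.
have h1 : all prime (primes n) by apply/allP => p; rewrite mem_primes => /and3P[].
have h2 : forall p, p \in primes n -> p %| n by move=> p; rewrite mem_primes => /and3P[].
have h3 : 2 \in primes n -> ~~ odd z.
  by move: hz; rewrite mem_primes dvdn2 => /orP[-> /and3P[]//|].
have [a [b [e g]]] := @units2_aux n z (primes n) n0 (primes_uniq n) h1 h2 h3.
exists a, b; split => //; apply: coprime_of_primes => // p pp pn;
  have pi : p \in primes n by rewrite mem_primes pp n0.
  by case: (g p pi).
by case: (g p pi).
Qed.

Lemma units23 n z : 0 < n -> exists s : seq nat,
  [/\ all (coprime^~ n) s, (size s == 2) || (size s == 3) & sumn s = z %[mod n]].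
Proof.
move=> n0; case hz: (odd n || ~~ odd z).
  have [a [b [ca cb e]]] := @units2 n z n0 hz.
  by exists [:: a; b]; rewrite /= ca cb addn0.
move: hz; case: z => [|z] /=; first by rewrite orbT.
rewrite negbK => /norP[_ oz].
have oz2 : odd n || ~~ odd z by rewrite oz orbT.
have [a [b [ca cb e]]] := @units2 n z n0 oz2.
exists [:: 1; a; b]; rewrite /= ca cb coprime1n addn0; split => //.
by rewrite add1n -addn1 -modnDml e modnDml addn1.
Qed.

Lemma gcd_lcm_dvd n A B : 0 < n -> 0 < A -> 0 < B ->
  gcdn n (lcmn A B) %| lcmn (gcdn n A) (gcdn n B).
Proof.
move=> n0 A0 B0.
have L0 : 0 < lcmn A B by rewrite lcmn_gt0 A0 B0.
have G0 : 0 < gcdn n (lcmn A B) by rewrite gcdn_gt0 n0.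
have GA : 0 < gcdn n A by rewrite gcdn_gt0 n0.
have GB : 0 < gcdn n B by rewrite gcdn_gt0 n0.
have R0 : 0 < lcmn (gcdn n A) (gcdn n B) by rewrite lcmn_gt0 GA GB.
apply/dvdn_partP => // p; rewrite mem_primes => /and3P[pp _ _].
rewrite p_part pfactor_dvdn // logn_gcd // logn_lcm // logn_lcm // !logn_gcd //.
lia.
Qed.

Lemma eqn_mod_lcm a b d1 d2 : a = b %[mod d1] -> a = b %[mod d2] ->
  a = b %[mod lcmn d1 d2].
Proof.
wlog ba : a b / b <= a.
  move=> W e1 e2; case: (leqP b a) => h; first exact: W.
  by symmetry; apply: W; [exact: ltnW| |].
move=> /eqP e1 /eqP e2; apply/eqP.
by move: e1 e2; rewrite !eqn_mod_dvd // dvdn_lcm => -> ->.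
Qed.

Lemma eqn_mod_dvdm a b d m : d %| m -> a = b %[mod m] -> a = b %[mod d].
Proof. by move=> dm e; rewrite -(modn_dvdm a dm) -(modn_dvdm b dm) e. Qed.

Local Open Scope ring_scope.

Definition Rel0 (n : nat) (v : nat -> algC) :=
  forall s : seq nat, all (coprime^~ n) s -> (0 < size s <= 6)%N ->
    (n %| sumn s)%N -> \prod_(a <- s) v a = 1.

Definition negn (n a : nat) := (n - a %% n)%N.

Lemma negn_dvd n a : (0 < n)%N -> (n %| a + negn n a)%N.
Proof.
move=> n0; rewrite /negn.
have h := ltn_pmod a n0; rewrite {1}(divn_eq a n).
rewrite -addnA subnKC; last exact: ltnW.
by rewrite dvdn_add // dvdn_mull.
Qed.

Lemma coprime_negn n a : (0 < n)%N -> coprime a n -> coprime (negn n a) n.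
Proof.
move=> n0 ca; rewrite /coprime -dvdn1 -(eqP ca) dvdn_gcd dvdn_gcdr andbT.
have h1 : (gcdn (negn n a) n %| a + negn n a)%N.
  exact: dvdn_trans (dvdn_gcdr _ _) (negn_dvd a n0).
by rewrite dvdn_addl in h1 => //; exact: dvdn_gcdl.
Qed.

Lemma balanced n v : (0 < n)%N -> Rel0 n v -> forall s t : seq nat,
  all (coprime^~ n) s -> all (coprime^~ n) t ->
  (0 < size s + size t <= 6)%N -> sumn s = sumn t %[mod n] ->
  \prod_(a <- s) v a = \prod_(a <- t) v a.
Proof.
move=> n0 R s t cs ct sz e.
pose t' := map (negn n) t.
have ct' : all (coprime^~ n) t'.
  by rewrite all_map; apply/allP => a at_; apply: coprime_negn => //; exact: (allP ct).
have pair : forall a, coprime a n -> v a * v (negn n a) = 1.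
  move=> a ca; have := R [:: a; negn n a]; rewrite /= big_cons big_seq1 => -> //.
  - by rewrite ca coprime_negn.
  - by rewrite addn0 negn_dvd.
have st : (n %| sumn t + sumn t')%N.
  rewrite /t'; elim: (t) => [|a r IH] //=.
  rewrite (_ : (a + sumn r + (negn n a + sumn (map (negn n) r)) =
     (a + negn n a) + (sumn r + sumn (map (negn n) r)))%N); last by lia.
  by rewrite dvdn_add // negn_dvd.
have R1 : \prod_(a <- s ++ t') v a = 1.
  apply: R; first by rewrite all_cat cs ct'.
    by rewrite size_cat /t' size_map.
  rewrite sumn_cat; move: st; rewrite /dvdn => /eqP st.
  by rewrite -modnDml e modnDml st.
have R2 : \prod_(a <- t) v a * \prod_(a <- t') v a = 1.
  rewrite /t' big_map -big_split /=; rewrite big_seq; apply: big1 => a at_.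
  by apply: pair; exact: (allP ct).
rewrite big_cat /= in R1.
transitivity (\prod_(a <- s) v a * (\prod_(a <- t) v a * \prod_(a <- t') v a)).
  by rewrite R2 mulr1.
by rewrite mulrCA R1 mulr1.
Qed.

Lemma rep3 n z : (0 < n)%N -> ~~ odd n -> odd z ->
  exists a b c, [/\ coprime a n, coprime b n, coprime c n & (a + b + c = z %[mod n])%N].
Proof.
move=> n0 en oz; case: z oz => [//|z] /= oz.
have h : odd n || ~~ odd z by rewrite oz orbT.
have [a [b [ca cb e]]] := @units2 n z n0 h.
exists 1%N, a, b; split => //; first exact: coprime1n.
by rewrite -addnA add1n -addn1 -modnDml e modnDml addn1.
Qed.

Lemma stepA n v : (0 < n)%N -> Rel0 n v ->
  v 1%N ^+ n = 1 /\ forall a, coprime a n -> v a = v 1%N ^+ a.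
Proof.
move=> n0 R; set b1 := v 1%N.
have Bal := balanced n0 R.
have P2 : forall a b, v a * v b = \prod_(i <- [:: a; b]) v i.
  by move=> a b; rewrite big_cons big_seq1.
have P3 : forall a b c, v a * v b * v c = \prod_(i <- [:: a; b; c]) v i.
  by move=> a b c; rewrite !big_cons big_nil mulr1 !mulrA.
have P4 : forall a b c d, v a * v b * v c * v d = \prod_(i <- [:: a; b; c; d]) v i.
  by move=> a b c d; rewrite !big_cons big_nil mulr1 !mulrA.
pose Q z := (forall a b, odd n || ~~ odd z -> coprime a n -> coprime b n ->
               (a + b = z %[mod n])%N -> v a * v b = b1 ^+ z) /\
            (forall a b c, ~~ odd n -> odd z -> coprime a n -> coprime b n -> coprime c n ->
               (a + b + c = z %[mod n])%N -> v a * v b * v c = b1 ^+ z).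
have c1 : coprime 1 n := coprime1n n.
have HQ : forall z, Q z.
  elim => [|z [IH2 IH3]].
    split => // a b _ ca cb e; rewrite expr0 P2.
    by rewrite (Bal _ [::]) ?big_nil //= ?ca ?cb // addn0.
  split.
  - move=> c d hz cc cd e.
    case on: (odd n).
      have hon : odd n || ~~ odd z by rewrite on.
      have [a [b [ca cb e']]] := @units2 n z n0 hon.
      rewrite P2 (Bal _ [:: a; b; 1%N]) /=; last first.
      + by rewrite !addn0 addnA e -[in RHS]modnDml e' modnDml addn1.
      + by [].
      + by rewrite ca cb c1.
      + by rewrite cc cd.
      by rewrite -P3 IH2 ?on // exprS mulrC.
    move: hz; rewrite on /= => ez.
    have oz : odd z by move: ez; rewrite /= negbK.
    have [a [b [f3 [ca cb ce e']]]] := rep3 n0 (negbT on) oz.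
    rewrite P2 (Bal _ [:: a; b; f3; 1%N]) /=; last first.
    + by rewrite !addn0 !addnA e -[in RHS]modnDml e' modnDml addn1.
    + by [].
    + by rewrite ca cb ce c1.
    + by rewrite cc cd.
    by rewrite -P4 IH3 ?on // exprS mulrC.
  - move=> c d e on oz cc cd ce e'.
    have ez : odd n || ~~ odd z by move: oz => /= ->; rewrite orbT.
    have [a [b [ca cb e2]]] := @units2 n z n0 ez.
    rewrite P3 (Bal _ [:: a; b; 1%N]) /=; last first.
    + by rewrite !addn0 !addnA e' -[in RHS]modnDml e2 modnDml addn1.
    + by [].
    + by rewrite ca cb c1.
    + by rewrite cc cd ce.
    by rewrite -P3 IH2 // exprS mulrC.
have cn1 : coprime n.-1 n := coprimePn n0.
have b0 : b1 * v n.-1 = 1.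
  rewrite P2 (Bal _ [::]) ?big_nil //= ?c1 ?cn1 // addn0.
  by rewrite add1n prednK // modnn mod0n.
have nb : b1 != 0 by apply/eqP => E; move: b0; rewrite E mul0r => /eqP; rewrite eq_sym oner_eq0.
split.
  rewrite -b0; symmetry; apply: (HQ n).1 => //; first by case: (odd n).
  by rewrite add1n prednK.
move=> a ca; case on: (odd n).
  apply: (mulIf nb); rewrite -exprSr; apply: (HQ a.+1).1 => //; first by rewrite on.
  by rewrite addn1.
have oa : odd a.
  apply/negPn/negP => ea; move: ca; rewrite /coprime => /eqP g1.
  have : (2 %| gcdn a n)%N by rewrite dvdn_gcd !dvdn2 ea on.
  by rewrite g1.
apply: (mulIf nb); apply: (mulIf nb); rewrite -!exprSr.
apply: (HQ a.+2).2 => //; first by rewrite on.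
  by rewrite /= negbK.
by rewrite -addnA addn2.
Qed.

Definition RelS (k : nat) (S : pred nat) (u : nat -> algC) :=
  forall s : seq nat, all S s -> (0 < size s <= 6)%N ->
    (k %| sumn s)%N -> \prod_(f <- s) u f = 1.

Definition closedS (k : nat) (S : pred nat) :=
  forall f f', gcdn f k = gcdn f' k -> S f -> S f'.

Lemma prod_expr (w : algC) (s : seq nat) (e : nat -> nat) :
  \prod_(a <- s) w ^+ (e a) = w ^+ (sumn (map e s)).
Proof.
elim: s => [|a s IH]; first by rewrite big_nil expr0.
by rewrite big_cons IH /= exprD.
Qed.

Lemma sumn_muln g (s : seq nat) : sumn (map (muln g) s) = (g * sumn s)%N.
Proof. by elim: s => [|a s IH] /=; rewrite ?muln0 // IH mulnDr. Qed.

Lemma S_mul k S g a : (0 < k)%N -> closedS k S -> (g %| k)%N -> S g ->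
  coprime a (k %/ g) -> S (g * a)%N.
Proof.
move=> k0 cl gk Sg ca; apply: (cl g) => //.
have g0 : (0 < g)%N by apply: dvdn_gt0 gk; exact: k0.
have kE : k = (g * (k %/ g))%N by rewrite mulnC divnK.
by rewrite (gcdn_idPl gk) [in RHS]kE -muln_gcdr (eqP ca) muln1.
Qed.

Lemma class_const k w S u g : (0 < k)%N -> k.-primitive_root w -> closedS k S ->
  RelS k S u -> (g %| k)%N -> S g ->
  exists c, forall f, gcdn f k = g -> u f = w ^+ (c * f).
Proof.
move=> k0 pw cl R gk Sg.
have g0 : (0 < g)%N by apply: dvdn_gt0 gk; exact: k0.
set n := (k %/ g)%N.
have kE : k = (n * g)%N by rewrite /n divnK.
have n0 : (0 < n)%N by move: k0; rewrite kE muln_gt0 => /andP[].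
pose v a := u (g * a)%N.
have R0 : Rel0 n v.
  move=> s cs sz ds; rewrite /v -(big_map (muln g) xpredT u).
  apply: R.
  - by rewrite all_map; apply/allP => a ain /=; apply: (@S_mul k S g a) => //; exact: (allP cs).
  - by rewrite size_map.
  - by rewrite sumn_muln kE mulnC dvdn_pmul2l.
have [e1 ev] := stepA n0 R0.
have pz : n.-primitive_root (w ^+ g).
  have nk : (n %| k)%N by rewrite kE dvdn_mulr.
  by have := dvdn_prim_root pw nk; rewrite [in X in X -> _]kE mulKn.
have [i Ei] := prim_rootP pz e1.
exists i => f gf.
have gf' : (g %| f)%N by rewrite -gf dvdn_gcdl.
set a := (f %/ g)%N.
have fE : f = (g * a)%N by rewrite /a mulnC divnK.
have ca : coprime a n.
  rewrite /coprime -(eqn_pmul2l g0) muln_gcdr -fE -mulnC -kE muln1 gf.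
  by [].
rewrite fE; have := ev a ca; rewrite Ei /v => ->; rewrite -!exprM; congr (w ^+ _); lia.
Qed.

Lemma gcd_mul_class k g a : (0 < k)%N -> (g %| k)%N -> coprime a (k %/ g)%N ->
  gcdn (g * a) k = g.
Proof.
move=> k0 gk ca.
have kE : k = (g * (k %/ g))%N by rewrite mulnC divnK.
by rewrite [in LHS]kE -muln_gcdr (eqP ca) muln1.
Qed.

Lemma sumn_mulc m (s : seq nat) (h : nat -> nat) : (forall a, h a = m * a)%N ->
  sumn (map h s) = (m * sumn s)%N.
Proof. by move=> hE; rewrite (eq_map hE) sumn_muln. Qed.

Lemma prod_class k w (u : nat -> algC) g c (s : seq nat) : (0 < k)%N -> (g %| k)%N ->
  all (coprime^~ (k %/ g)%N) s ->
  (forall f, gcdn f k = g -> u f = w ^+ (c * f)) ->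
  \prod_(f <- map (muln g) s) u f = w ^+ (c * (g * sumn s)).
Proof.
move=> k0 gk cs P; rewrite big_map.
rewrite (eq_big_seq (fun a => w ^+ (c * g * a))); last first.
  move=> a ain; rewrite P ?mulnA //; apply: gcd_mul_class => //; exact: (allP cs).
by rewrite prod_expr (sumn_mulc _ (fun a => erefl _)) mulnA.
Qed.

Lemma mod_mul_class k g z y : (g %| k)%N -> (z = y %[mod k %/ g])%N ->
  (g * z = g * y %[mod k])%N.
Proof.
move=> gk e; have kE : k = (g * (k %/ g))%N by rewrite mulnC divnK.
by rewrite kE -!muln_modr e.
Qed.

Lemma stepB k w S u g1 g2 c1 c2 : (0 < k)%N -> k.-primitive_root w -> closedS k S ->
  RelS k S u -> (g1 %| k)%N -> (g2 %| k)%N -> S g1 -> S g2 ->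
  (forall f, gcdn f k = g1 -> u f = w ^+ (c1 * f)) ->
  (forall f, gcdn f k = g2 -> u f = w ^+ (c2 * f)) ->
  (c1 = c2 %[mod gcdn (k %/ g1) (k %/ g2)])%N.
Proof.
move=> k0 pw cl R g1k g2k S1 S2 P1 P2.
set n1 := (k %/ g1)%N; set n2 := (k %/ g2)%N; set d := gcdn n1 n2.
have g10 : (0 < g1)%N by apply: dvdn_gt0 g1k; exact: k0.
have g20 : (0 < g2)%N by apply: dvdn_gt0 g2k; exact: k0.
have k1E : k = (g1 * n1)%N by rewrite mulnC divnK.
have k2E : k = (g2 * n2)%N by rewrite mulnC divnK.
have n10 : (0 < n1)%N by move: k0; rewrite k1E muln_gt0 => /andP[].
have n20 : (0 < n2)%N by move: k0; rewrite k2E muln_gt0 => /andP[].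
have d0 : (0 < d)%N by rewrite gcdn_gt0 n10.
have dn1 : (d %| n1)%N := dvdn_gcdl _ _.
have dn2 : (d %| n2)%N := dvdn_gcdr _ _.
have dk : (d %| k)%N by rewrite k1E dvdn_mull.
set K := (k %/ d)%N.
have KE1 : (g1 * (n1 %/ d))%N = K by rewrite muln_divA // -k1E.
have KE2 : (g2 * (n2 - n2 %/ d))%N = (k - K)%N by rewrite mulnBr muln_divA // -k2E.
have Kk : (K <= k)%N by rewrite leq_div.
have [s1 [cs1 sz1 e1]] := units23 (n1 %/ d) n10.
have [s2 [cs2 sz2 e2]] := units23 (n2 - n2 %/ d) n20.
have E1 : (g1 * sumn s1 = K %[mod k])%N by rewrite -KE1; exact: mod_mul_class.
have E2 : (g2 * sumn s2 = k - K %[mod k])%N by rewrite -KE2; exact: mod_mul_class.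
have R1 : \prod_(f <- map (muln g1) s1 ++ map (muln g2) s2) u f = 1.
  apply: R.
  - rewrite all_cat !all_map; apply/andP; split; apply/allP => a ain /=.
      by apply: (@S_mul k S g1 a) => //; exact: (allP cs1).
    by apply: (@S_mul k S g2 a) => //; exact: (allP cs2).
  - by rewrite size_cat !size_map; move: sz1 sz2 => /orP[/eqP->|/eqP->] /orP[/eqP->|/eqP->].
  - rewrite sumn_cat !sumn_muln /dvdn -modnDm E1 E2 modnDm subnKC //.
    by rewrite modnn.
rewrite big_cat /= (prod_class k0 g1k cs1 P1) (prod_class k0 g2k cs2 P2) in R1.
have W1 : w ^+ (g1 * sumn s1) = w ^+ K by rewrite -(prim_expr_mod pw) E1 prim_expr_mod.
have W2 : w ^+ (g2 * sumn s2) = w ^+ (k - K) by rewrite -(prim_expr_mod pw) E2 prim_expr_mod.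
rewrite (mulnC c1) (mulnC c2) (exprM w (g1 * sumn s1)) (exprM w (g2 * sumn s2)) W1 W2 in R1.
have pz : d.-primitive_root (w ^+ K) := dvdn_prim_root pw dk.
have Wk : w ^+ K * w ^+ (k - K) = 1 by rewrite -exprD subnKC // prim_expr_order.
apply/eqP; rewrite -(eq_prim_root_expr pz); apply/eqP.
rewrite -[LHS]mulr1 -(expr1n _ c2) -Wk exprMn mulrCA R1 mulr1.
by [].
Qed.

Lemma P_mod k w (u : nat -> algC) g c1 c2 : (0 < k)%N -> k.-primitive_root w -> (g %| k)%N ->
  (c1 = c2 %[mod k %/ g])%N ->
  (forall f, gcdn f k = g -> u f = w ^+ (c1 * f)) ->
  forall f, gcdn f k = g -> u f = w ^+ (c2 * f).
Proof.
move=> k0 pw gk e P f gf; rewrite P //; apply/eqP; rewrite (eq_prim_root_expr pw).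
have gf' : (g %| f)%N by rewrite -gf dvdn_gcdl.
rewrite -(divnK gf') (mulnC _ g) !(mulnCA _ g); apply/eqP; apply: mod_mul_class => //.
by rewrite -modnMml e modnMml.
Qed.

Lemma crt2 a b m M : (0 < m)%N -> (0 < M)%N -> (a = b %[mod gcdn m M])%N ->
  exists c, (c = a %[mod m])%N /\ (c = b %[mod M])%N.
Proof.
move=> m0 M0 e; set G := gcdn m M.
have G0 : (0 < G)%N by rewrite gcdn_gt0 m0.
have [x _ hx] := Bezoutl M m0.
have Gm : (G %| m)%N := dvdn_gcdl _ _.
have hG : (G %| b + m.-1 * a)%N.
  have h1 : (b + m.-1 * a + a = 0 + a %[mod G])%N.
    rewrite -addnA -{2}(mul1n a) -mulnDl addn1 prednK // add0n.
    have Gma : (G %| m * a)%N by rewrite dvdn_mulr.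
    by rewrite -modnDmr (eqP Gma) addn0 e.
  by move/eqP: h1; rewrite eqn_modDr mod0n.
set q := ((b + m.-1 * a) %/ G)%N.
have Gq : (G * q = b + m.-1 * a)%N by rewrite mulnC divnK.
exists (b + M * x * q)%N; split; last first.
  by rewrite addnC -mulnA [(M * _)%N]mulnC modnMDl.
have h2 : (b + M * x * q + G * q = b %[mod m])%N.
  rewrite -addnA -mulnDl (mulnC M) [(x * M + G)%N]addnC addnC.
  by move: hx; rewrite /dvdn => /eqP hx; rewrite -modnDml -modnMml hx mul0n mod0n add0n.
rewrite Gq in h2.
have h3 : (b + M * x * q + m.-1 * a + a = a %[mod m])%N.
  have : (b + M * x * q + m.-1 * a + b = 0 + b %[mod m])%N.
    have -> : (b + M * x * q + m.-1 * a + b = b + M * x * q + (b + m.-1 * a))%N by lia.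
    by rewrite add0n h2.
  move/eqP; rewrite eqn_modDr => /eqP h4.
  by rewrite -modnDml h4 mod0n.
have E : (b + M * x * q + m.-1 * a + a = a * m + (b + M * x * q))%N.
  rewrite -addnA -{2}(mul1n a) -mulnDl addn1 prednK // addnC mulnC //.
by rewrite -h3 E modnMDl.
Qed.

Definition Mof (k : nat) (L : seq nat) := foldr (fun h acc => lcmn (k %/ h) acc) 1%N L.

Lemma Mof_gt0 k L : (0 < k)%N -> (forall h, h \in L -> (h %| k)%N) -> (0 < Mof k L)%N.
Proof.
move=> k0; elim: L => [|h L IH] //= H.
rewrite lcmn_gt0 IH ?andbT; last by move=> h' hin; apply: H; rewrite inE hin orbT.
have hk : (h %| k)%N by apply: H; rewrite inE eqxx.
by rewrite divn_gt0 ?(dvdn_leq k0) // (dvdn_gt0 k0 hk).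
Qed.

Lemma Mof_dvd k L h : h \in L -> ((k %/ h) %| Mof k L)%N.
Proof.
elim: L => [|h' L IH] //=; rewrite inE => /orP[/eqP <-|hin]; first exact: dvdn_lcml.
exact: dvdn_trans (IH hin) (dvdn_lcmr _ _).
Qed.

Lemma Mof_compat k L n a b : (0 < k)%N -> (0 < n)%N -> (forall h, h \in L -> (h %| k)%N) ->
  (forall h, h \in L -> (a = b %[mod gcdn n (k %/ h)])%N) ->
  (a = b %[mod gcdn n (Mof k L)])%N.
Proof.
move=> k0 n0; elim: L => [|h L IH] /= Hd He; first by rewrite gcdn1 !modn1.
have Hd' : forall h', h' \in L -> (h' %| k)%N by move=> h' hin; apply: Hd; rewrite inE hin orbT.
have hk : (h %| k)%N by apply: Hd; rewrite inE eqxx.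
have A0 : (0 < k %/ h)%N by rewrite divn_gt0 ?(dvdn_leq k0) // (dvdn_gt0 k0 hk).
apply: (eqn_mod_dvdm (gcd_lcm_dvd n0 A0 (Mof_gt0 k0 Hd'))).
apply: eqn_mod_lcm; first by apply: He; rewrite inE eqxx.
by apply: IH => // h' hin; apply: He; rewrite inE hin orbT.
Qed.

Lemma core k w S u : (0 < k)%N -> k.-primitive_root w -> closedS k S -> RelS k S u ->
  exists c, forall f, S f -> u f = w ^+ (c * f).
Proof.
move=> k0 pw cl R.
pose P g c := forall f, gcdn f k = g -> u f = w ^+ (c * f).
have main : forall L : seq nat, (forall g, g \in L -> (g %| k)%N /\ S g) ->
    exists c, forall g, g \in L -> P g c.
  elim => [|g L IH] H; first by exists 0%N.
  have H' : forall h, h \in L -> (h %| k)%N /\ S h by move=> h hin; apply: H; rewrite inE hin orbT.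
  have [gk Sg] : (g %| k)%N /\ S g by apply: H; rewrite inE eqxx.
  have [c' Pc'] := IH H'.
  have [cg Pcg] := class_const k0 pw cl R gk Sg.
  have Hd : forall h, h \in L -> (h %| k)%N by move=> h hin; case: (H' h hin).
  have n0 : (0 < k %/ g)%N by rewrite divn_gt0 ?(dvdn_leq k0) // (dvdn_gt0 k0 gk).
  have comp : (cg = c' %[mod gcdn (k %/ g) (Mof k L)])%N.
    apply: Mof_compat => // h hin; have [hk Sh] := H' h hin.
    exact: stepB k0 pw cl R gk hk Sg Sh Pcg (Pc' h hin).
  have [c [e1 e2]] := crt2 n0 (Mof_gt0 k0 Hd) comp.
  exists c => h; rewrite inE => /orP[/eqP ->|hin].
    by apply: (P_mod k0 pw gk _ Pcg); rewrite e1.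
  have hk := Hd h hin.
  apply: (P_mod k0 pw hk _ (Pc' h hin)).
  by symmetry; apply: eqn_mod_dvdm (Mof_dvd k hin) e2.
have HL : forall g, g \in [seq g <- divisors k | S g] -> (g %| k)%N /\ S g.
  by move=> g; rewrite mem_filter -dvdn_divisors // => /andP[].
have [c Pc] := main _ HL.
exists c => f Sf; apply: (Pc (gcdn f k)) => //.
rewrite mem_filter -dvdn_divisors // dvdn_gcdr andbT.
by apply: (cl f) => //; rewrite (gcdn_idPl (dvdn_gcdr f k)).
Qed.

Definition xf (k : nat) (x : k.-tuple int) (i : nat) : algC := (at_mod x i%:Z)%:~R.
Definition DFT (k : nat) (w : algC) (x : k.-tuple int) (f : nat) : algC :=
  \sum_(i < k) w ^+ (f * i) * xf x i.

Lemma at_mod_addk k (x : k.-tuple int) (a : int) : at_mod x (a + k%:Z) = at_mod x a.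
Proof. by rewrite /at_mod addrAC modzDr. Qed.

Lemma xf_addk k (x : k.-tuple int) i : xf x (i + k) = xf x i.
Proof. by rewrite /xf PoszD at_mod_addk. Qed.

Lemma xf_mod k (x : k.-tuple int) i : xf x (i %% k) = xf x i.
Proof.
rewrite {2}(divn_eq i k); elim: (i %/ k)%N => [|m IH]; first by rewrite mul0n add0n.
by rewrite mulSn -addnA addnC xf_addk.
Qed.

Lemma DFT_shift k w (x : k.-tuple int) f s : (0 < k)%N -> k.-primitive_root w ->
  (\sum_(i < k) w ^+ (f * i) * xf x (i + s)) * w ^+ (f * s) = DFT w x f.
Proof.
move=> k0 pw; rewrite mulr_suml.
have h : forall i : 'I_k, ((i + s) %% k < k)%N by move=> i; rewrite ltn_pmod.
pose hh (i : 'I_k) : 'I_k := Ordinal (h i).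
have hinj : injective hh.
  move=> i j /(congr1 val) /= /eqP; rewrite eqn_modDr !modn_small // => /eqP.
  exact: val_inj.
rewrite /DFT [RHS](reindex_inj hinj) /=; apply: eq_bigr => i _.
rewrite xf_mod mulrAC -exprD -mulnDr; congr (_ * _).
by rewrite -[RHS](prim_expr_mod pw) modnMmr (prim_expr_mod pw).
Qed.

Lemma iter_addr (C : algC) n : iter n (+%R C) 0 = n%:R * C.
Proof.
elim: n => [|n IH] /=; first by rewrite mul0r.
by rewrite IH mulrSr mulrDl mul1r addrC.
Qed.

Lemma DFT_stat k w (z : k.-tuple int) m (F : 'I_m -> nat) : (0 < k)%N ->
  k.-primitive_root w -> (k %| \sum_(l < m) F l)%N ->
  \sum_(phi : {ffun 'I_m -> 'I_k})
     (\prod_(l < m) w ^+ (F l * phi l)) * (cyc_stat (fun l => (phi l).+1) z)%:~R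
  = k%:R * \prod_(l < m) DFT w z (F l).
Proof.
move=> k0 pw dF.
under eq_bigr => phi _ do rewrite /cyc_stat rmorph_sum mulr_sumr.
rewrite exchange_big /=.
have Hj : forall j : nat,
  \sum_(phi : {ffun 'I_m -> 'I_k})
     (\prod_(l < m) w ^+ (F l * phi l)) *
       (\prod_(l < m) at_mod z ((phi l).+1 + j)%N%:Z)%:~R
  = \prod_(l < m) DFT w z (F l).
  move=> j.
  pose G l (i : 'I_k) := w ^+ (F l * i) * xf z (i + j.+1).
  transitivity (\sum_(phi : {ffun 'I_m -> 'I_k}) \prod_(l < m) G l (phi l)).
    apply: eq_bigr => phi _; rewrite rmorph_prod -big_split /=.
    by apply: eq_bigr => l _; rewrite /G /xf addSnnS.
  rewrite -bigA_distr_bigA /=.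
  have e1 : \prod_(l < m) w ^+ (F l * j.+1) = 1.
    rewrite prodrXr -big_distrl /= mulnC -(prim_expr_mod pw).
    by move: dF; rewrite /dvdn => /eqP dF0; rewrite -modnMmr dF0 muln0 mod0n expr0.
  transitivity ((\prod_(l < m) \sum_(i < k) G l i) * \prod_(l < m) w ^+ (F l * j.+1)).
    by rewrite e1 mulr1.
  rewrite -big_split /=.
  by apply: eq_bigr => l _; rewrite /G DFT_shift.
under eq_bigr => j _ do rewrite Hj.
rewrite big_const_nat subSS subn0.
by rewrite iter_addr.
Qed.

Definition HypS k (x y : k.-tuple int) :=
  forall (m : nat) (i : 'I_m -> nat), (1 <= m <= 6)%N ->
     (forall l, (1 <= i l <= k)%N) -> cyc_stat i x = cyc_stat i y.

Lemma rel_DFT k w (x y : k.-tuple int) : (0 < k)%N -> k.-primitive_root w -> HypS x y ->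
  forall s : seq nat, (0 < size s <= 6)%N -> (k %| sumn s)%N ->
  \prod_(f <- s) DFT w x f = \prod_(f <- s) DFT w y f.
Proof.
move=> k0 pw H s sz ds.
pose F (l : 'I_(size s)) := nth 0%N s l.
have dF : (k %| \sum_(l < size s) F l)%N.
  by move: ds; rewrite sumnE (big_nth 0%N) big_mkord.
have ex := @DFT_stat k w x (size s) F k0 pw dF.
have ey := @DFT_stat k w y (size s) F k0 pw dF.
have e : k%:R * \prod_(l < size s) DFT w x (F l) = k%:R * \prod_(l < size s) DFT w y (F l).
  rewrite -ex -ey; apply: eq_bigr => phi _.
  have -> : cyc_stat (fun l => (phi l).+1) x = cyc_stat (fun l => (phi l).+1) y.
    apply: H; first exact: sz.
    by move=> l /=; rewrite ltn_ord.
  reflexivity.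
have kn0 : (k%:R : algC) != 0 by rewrite pnatr_eq0 -lt0n.
move/(mulfI kn0): e => e'.
rewrite (big_nth 0%N) [in RHS](big_nth 0%N) !big_mkord.
exact: e'.
Qed.

Lemma DFT_zero_class k w (x : k.-tuple int) f f' : (0 < k)%N -> k.-primitive_root w ->
  gcdn f k = gcdn f' k -> DFT w x f = 0 -> DFT w x f' = 0.
Proof.
move=> k0 pw gf.
pose q : {poly rat} := \sum_(i < k) ((at_mod x i%:Z)%:~R)%:P * 'X^i.
have hq : forall e, DFT w x e = (map_poly ratr q).[w ^+ e].
  move=> e; rewrite /q rmorph_sum horner_sum; apply: eq_bigr => i _.
  by rewrite rmorphM /= map_polyC map_polyXn hornerCM hornerXn /= ratr_int exprM mulrC.
have p1 := exp_prim_root pw f.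
have p2 := exp_prim_root pw f'.
rewrite -gf in p2.
have mz : minCpoly (w ^+ f) = minCpoly (w ^+ f').
  by rewrite (minCpoly_cyclotomic p1) (minCpoly_cyclotomic p2) -(Cintr_Cyclotomic p1) -(Cintr_Cyclotomic p2).
have [p [Dp _] rp] := minCpolyP (w ^+ f).
have [p' [Dp' _] rp'] := minCpolyP (w ^+ f').
have pp : p = p' by apply: (map_poly_inj (@ratr algC)); rewrite -Dp -Dp' mz.
rewrite !hq => /eqP h; apply/eqP.
by move: (rp q) (rp' q); rewrite /root h pp => <- ->.
Qed.

Lemma sum_pow_prim k (w : algC) e : (0 < k)%N -> k.-primitive_root w ->
  \sum_(f < k) w ^+ (f * e) = if (k %| e)%N then k%:R else 0.
Proof.
move=> k0 pw; under eq_bigr => f _ do rewrite mulnC exprM.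
case: ifP => h.
  have -> : w ^+ e = 1 by apply/eqP; rewrite -(prim_order_dvd pw).
  by rewrite (eq_bigr (fun _ => 1)) ?sumr_const ?card_ord // => i _; rewrite expr1n.
have r1 : w ^+ e != 1 by rewrite -(prim_order_dvd pw) h.
have : (w ^+ e - 1) * \sum_(f < k) (w ^+ e) ^+ f = 0.
  by rewrite -subrX1 -exprM mulnC exprM (prim_expr_order pw) expr1n subrr.
by move/eqP; rewrite mulf_eq0 subr_eq0 (negbTE r1) /= => /eqP.
Qed.

Lemma dvd_shift k i j : (i < k)%N -> (j < k)%N -> (k %| i + (k - j))%N = (i == j).
Proof.
move=> ik jk; case: (eqVneq i j) => [->|nij]; first by rewrite subnKC ?dvdnn // ltnW.
apply/negbTE; rewrite /dvdn; case: (leqP j i) => h.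
  have -> : (i + (k - j) = k + (i - j))%N by lia.
  by rewrite modnDl modn_small; lia.
by rewrite modn_small; lia.
Qed.

Lemma DFT_inj0 k (w : algC) (a : nat -> algC) : (0 < k)%N -> k.-primitive_root w ->
  (forall f, (f < k)%N -> \sum_(i < k) w ^+ (f * i) * a i = 0) ->
  forall j, (j < k)%N -> a j = 0.
Proof.
move=> k0 pw H j jk.
have E : \sum_(f < k) w ^+ (f * (k - j)) * (\sum_(i < k) w ^+ (f * i) * a i) = k%:R * a j.
  under eq_bigr => f _ do rewrite mulr_sumr.
  rewrite exchange_big /=.
  transitivity (\sum_(i < k) (\sum_(f < k) w ^+ (f * (i + (k - j)))) * a i).
    apply: eq_bigr => i _; rewrite mulr_suml; apply: eq_bigr => f _.
    by rewrite mulrA -exprD -mulnDr addnC.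
  rewrite (bigD1 (Ordinal jk)) //= [X in _ + X]big1 ?addr0.
    by rewrite sum_pow_prim // dvd_shift // eqxx.
  move=> i nij; rewrite sum_pow_prim // dvd_shift //.
  have -> : (i == j :> nat) = false.
    by apply/negbTE; apply: contra nij => /eqP E; apply/eqP; apply: val_inj.
  by rewrite mul0r.
have kn0 : (k%:R : algC) != 0 by rewrite pnatr_eq0 -lt0n.
move: E; rewrite big1 => [/esym/eqP|f _]; last by rewrite H ?mulr0.
by rewrite mulf_eq0 (negbTE kn0) /= => /eqP.
Qed.

Lemma DFT_shift_inv k w (x y : k.-tuple int) c : (0 < k)%N -> k.-primitive_root w ->
  (forall f, (f < k)%N -> DFT w y f = w ^+ (c * f) * DFT w x f) ->
  forall j, xf y (j + c) = xf x j.
Proof.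
move=> k0 pw H.
pose d i := xf y (i + c) - xf x i.
have D0 : forall f, (f < k)%N -> \sum_(i < k) w ^+ (f * i) * d i = 0.
  move=> f fk.
  have wn0 : w ^+ (f * c) != 0 by rewrite expf_neq0 // (prim_root_eq0 pw) -lt0n.
  apply/eqP; rewrite -(mulIr_eq0 _ (mulIf wn0)) /d.
  under eq_bigr => i _ do rewrite mulrBr.
  rewrite sumrB mulrBl DFT_shift // -/(DFT w x f) H // mulnC mulrC subrr.
  by [].
move=> j; have := DFT_inj0 k0 pw D0 (ltn_pmod j k0).
rewrite /d => /eqP; rewrite subr_eq0 => /eqP.
by rewrite -[in X in X = _ -> _]xf_mod modnDml xf_mod xf_mod.
Qed.

Lemma gcd_negn k f : (0 < k)%N -> gcdn (negn k f) k = gcdn f k.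
Proof.
move=> k0; rewrite -(gcdn_modl f k) /negn; set r := (f %% k)%N.
have rk : (r <= k)%N by rewrite ltnW // ltn_pmod.
apply/eqP; rewrite eqn_dvd !dvdn_gcd !dvdn_gcdr !andbT.
apply/andP; split.
  rewrite -{2}(subKn rk); apply: dvdn_sub; [exact: dvdn_gcdr | exact: dvdn_gcdl].
apply: dvdn_sub; [exact: dvdn_gcdr | exact: dvdn_gcdl].
Qed.

Theorem lemma3p11 (k : nat) (x y : k.-tuple int) :
  (forall (m : nat) (i : 'I_m -> nat), (1 <= m <= 6)%N ->
     (forall l, (1 <= i l <= k)%N) ->
     cyc_stat i x = cyc_stat i y) ->
  exists c : int, forall j : nat, (1 <= j <= k)%N ->
     at_mod x j%:Z = at_mod y (j%:Z + c).
Proof.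
move=> H; case: (posnP k) => [k0|k0].
  by exists 0 => j /andP[h1 h2]; exfalso; move: h1 h2 k0; clear; lia.
have [w pw] := C_prim_root_exists k0.
have HS : HypS x y := H.
have R2 : forall f, DFT w x f * DFT w x (negn k f) = DFT w y f * DFT w y (negn k f).
  move=> f; have := rel_DFT k0 pw HS (s := [:: f; negn k f]).
  rewrite !big_cons !big_nil !mulr1; apply => //=.
  by rewrite addn0 negn_dvd.
have gN : forall f, gcdn f k = gcdn (negn k f) k by move=> f; rewrite gcd_negn.
have XY : forall f, (DFT w x f == 0) = (DFT w y f == 0).
  move=> f; apply/idP/idP => /eqP h.
    have h' := DFT_zero_class k0 pw (gN f) h.
    by move: (R2 f); rewrite h mul0r => /esym/eqP; rewrite mulf_eq0 => /orP[] // /eqP h2;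
      rewrite -(DFT_zero_class k0 pw (esym (gN f)) h2).
  by move: (R2 f); rewrite h mul0r => /eqP; rewrite mulf_eq0 => /orP[] // /eqP h2;
    rewrite -(DFT_zero_class k0 pw (esym (gN f)) h2).
pose S := fun f => DFT w x f != 0.
pose u := fun f => DFT w y f / DFT w x f.
have cl : closedS k S.
  move=> f f' gf; rewrite /S; apply: contra => /eqP h; apply/eqP.
  exact: DFT_zero_class k0 pw (esym gf) h.
have R : RelS k S u.
  move=> s aS sz ds; rewrite /u big_split /= prodfV (rel_DFT k0 pw HS sz ds).
  rewrite -(rel_DFT k0 pw HS sz ds) divff //.
  by rewrite prodf_seq_neq0.
have [c Hc] := core k0 pw cl R.
have HY : forall f, (f < k)%N -> DFT w y f = w ^+ (c * f) * DFT w x f.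
  move=> f _; case Sf: (S f).
    by rewrite -(Hc f Sf) /u divfK.
  move: Sf; rewrite /S => /negbFE h; rewrite (eqP h) mulr0; apply/eqP.
  by rewrite -XY.
have Inv := DFT_shift_inv k0 pw HY.
exists c%:Z => j _.
apply: (@intr_inj algC).
by have := Inv j; rewrite /xf PoszD => ->.
Qed.
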